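(* Let $v\equiv 1$ or $7\pmod{24}$ with $v\ge 7$, and let $n=\frac{v-1}{6}$. For every integer $i$ with $0\le i\le n$ there exists a cyclic three-fold triple system CTS$(v,3)$ with fine structure $(c_1,c_2,c_3)$ satisfying $c_2=n-i$ and $c_3=i$ (and hence $c_1=3n-2c_2-3c_3$).
   Context: A cyclic $\lambda$-fold triple system CTS$(v,\lambda)$ is a multiset $\mathcal B$ of 3-element subsets (blocks) of $\mathbb Z_v$ such that every 2-element subset of $\mathbb Z_v$ is contained in exactly $\lambda$ blocks (counted with multiplicity), and $\mathcal B$ is invariant under the translation $x\mapsto x+1$. Thus $\mathcal B$ is a union of translation orbits of 3-subsets with multiplicities; a base block is an orbit representative. The fine structure is $(c_1,\ldots,c_\lambda)$, where $c_i$ is the number of distinct base blocks (orbits) occurring with multiplicity exactly $i$. For $\lambda=3$ the paper writes the fine structure as the pair $(t,s)=(c_2,c_3)$. *)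

(* Defs.v *)
(* Cyclic lambda-fold triple systems on Z_v, represented on 'I_v
   with the cyclic successor ordS (i |-> (i+1) mod v). *)
From mathcomp Require Import all_boot.
Set Implicit Arguments. Unset Strict Implicit. Unset Printing Implicit Defensive.

Definition shiftB (v : nat) (B : {set 'I_v}) : {set 'I_v} := [set ordS x | x in B].

(* A multiset of blocks is a multiplicity function m on subsets of Z_v. *)
Definition is_CTS (v lambda : nat) (m : {ffun {set 'I_v} -> nat}) : Prop :=
  [/\ (forall B, 0 < m B -> #|B| = 3),
      (forall x y : 'I_v, x != y ->
          \sum_(B : {set 'I_v} | (x \in B) && (y \in B)) m B = lambda)
    & (forall B, m (shiftB B) = m B)].

Definition orbitB (v : nat) (B : {set 'I_v}) : {set {set 'I_v}} :=
  [set iter k (@shiftB v) B | k : 'I_v].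

Definition fine_c (v : nat) (m : {ffun {set 'I_v} -> nat}) (i : nat) : nat :=
  #|[set orbitB B | B in [set B : {set 'I_v} | m B == i]]|.

(* Main.v *)
Require Import Defs.
From mathcomp Require Import all_boot all_order all_algebra zify ring.
Set Implicit Arguments. Unset Strict Implicit. Unset Printing Implicit Defensive.
Import GRing.Theory.

Local Open Scope ring_scope.

Lemma valZ_add w (x y : 'I_(w.+2)) : val (x + y)%R = ((val x + val y) %% w.+2)%N.
Proof. by []. Qed.

Lemma valZ_nat w p : val (p%:R : 'I_(w.+2))%R = (p %% w.+2)%N.
Proof. by rewrite Zp_nat. Qed.

Lemma valZ0 w : val (0 : 'I_(w.+2))%R = 0%N.
Proof. by []. Qed.

Lemma eqZ_nat w (x : 'I_(w.+2)) p : (p < w.+2)%N -> (x == p%:R)%R = (val x == p).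
Proof. by move=> hp; rewrite -val_eqE /= valZ_nat modn_small. Qed.

Lemma ordS_add1 w (x : 'I_(w.+2)) : ordS x = (x + 1)%R.
Proof. by apply: val_inj; rewrite /= modnDmr addn1. Qed.

Definition trs w (k : 'I_(w.+2)) (X : {set 'I_(w.+2)}) : {set 'I_(w.+2)} :=
  [set y | (y - k)%R \in X].

Lemma trs0 w (X : {set 'I_(w.+2)}) : trs 0%R X = X.
Proof. by apply/setP => y; rewrite inE subr0. Qed.

Lemma trsD w (k l : 'I_(w.+2)) X : trs k (trs l X) = trs (k + l)%R X.
Proof. by apply/setP => y; rewrite !inE opprD addrA. Qed.

Lemma shiftB_trs w (X : {set 'I_(w.+2)}) : shiftB X = trs 1%R X.
Proof.
apply/setP => y; rewrite inE; apply/imsetP/idP.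
  by case=> x Hx ->; rewrite ordS_add1 addrK.
by move=> H; exists (y - 1)%R => //; rewrite ordS_add1 subrK.
Qed.

Lemma iter_shiftB w k (X : {set 'I_(w.+2)}) : iter k (@shiftB _) X = trs k%:R X.
Proof.
elim: k => [|k IH]; first by rewrite trs0.
by rewrite iterS IH shiftB_trs trsD mulrSr addrC.
Qed.

Lemma mem_orbitB w (B X : {set 'I_(w.+2)}) :
  (B \in orbitB X) = [exists k : 'I_(w.+2), B == trs k X].
Proof.
apply/imsetP/existsP.
  by case=> k _ ->; exists k; rewrite iter_shiftB natr_Zp.
by case=> k /eqP ->; exists k => //; rewrite iter_shiftB natr_Zp.
Qed.

Lemma orbitB_imset w (X : {set 'I_(w.+2)}) :
  orbitB X = (fun k => trs k X) @: [set: 'I_(w.+2)].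
Proof.
apply/setP => B; rewrite mem_orbitB; apply/existsP/imsetP.
  by case=> k /eqP ->; exists k.
by case=> k _ ->; exists k.
Qed.

Lemma orbitB_trs w k (X : {set 'I_(w.+2)}) : orbitB (trs k X) = orbitB X.
Proof.
apply/setP => B; rewrite !mem_orbitB; apply/existsP/existsP.
  by case=> l /eqP ->; exists (l + k)%R; rewrite trsD.
by case=> l /eqP ->; exists (l - k)%R; rewrite trsD subrK.
Qed.

Lemma trs_inv w (k l : 'I_(w.+2)) X Y : trs k X = trs l Y -> X = trs (l - k)%R Y.
Proof.
move=> H; have := congr1 (trs (- k)%R) H.
by rewrite !trsD addNr trs0 addrC.
Qed.

Definition blk w (p q : nat) : {set 'I_(w.+2)} :=
  [set y | (y == 0%:R)%R || (y == p%:R)%R || (y == q%:R)%R].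

Lemma mem_blk w (x : 'I_(w.+2)) p q : (p < w.+2)%N -> (q < w.+2)%N ->
  (x \in blk w p q) = [|| val x == 0%N, val x == p | val x == q].
Proof.
by move=> hp hq; rewrite inE !eqZ_nat // orbA.
Qed.

Definition Nf w (X : {set 'I_(w.+2)}) (d : 'I_(w.+2)) : nat :=
  \sum_(u : 'I_(w.+2)) ((u \in X) * ((u + d)%R \in X)).

Lemma Nf_trs w k (X : {set 'I_(w.+2)}) d : Nf (trs k X) d = Nf X d.
Proof.
rewrite /Nf (reindex_inj (addIr k)) /=; apply: eq_bigr => u _.
rewrite !inE addrK. by rewrite (addrAC u k d) addrK.
Qed.

Local Close Scope ring_scope.

Local Open Scope ring_scope.

Lemma mod2 (x V : nat) : (x < V + V)%N -> (x %% V = if (x < V)%N then x else x - V)%N.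
Proof.
move=> h; case: ifP => h1; first by rewrite modn_small.
have hV : (V <= x)%N by rewrite leqNgt h1.
by rewrite -{1}(subnK hV) modnDr modn_small //; lia.
Qed.

Ltac modt := rewrite mod2; [case: ifP => ? | lia]; lia.
Ltac beq := apply/eqP/eqP; modt.
Ltac bfalse := apply/negbTE/eqP; modt.

Lemma sum_eq1 w (s : 'I_(w.+2)) (F : 'I_(w.+2) -> nat) :
  (\sum_u ((u == s) * F u) = F s)%N.
Proof.
rewrite (bigD1 s) //= eqxx mul1n big1 ?addn0 // => u /negbTE ->; by rewrite mul0n.
Qed.

Lemma eqZ_shift w (d : 'I_(w.+2)) s r : (s < w.+2)%N -> (r < w.+2)%N ->
  (s%:R + d == r%:R) = ((s + val d) %% w.+2 == r)%N.
Proof. by move=> hs hr; rewrite eqZ_nat // valZ_add valZ_nat (modn_small hs). Qed.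

Lemma mem3 w (u : 'I_(w.+2)) p q : (0 < p)%N -> (p < q)%N -> (q < w.+2)%N ->
  nat_of_bool (u \in blk w p q) = ((u == 0%:R) + (u == p%:R) + (u == q%:R))%N.
Proof.
move=> h0 hpq hq.
have h0p : (0%:R : 'I_(w.+2)) != p%:R by rewrite eqZ_nat /= ?valZ_nat ?modn_small //; lia.
have h0q : (0%:R : 'I_(w.+2)) != q%:R by rewrite eqZ_nat /= ?valZ_nat ?modn_small //; lia.
have hpq' : (p%:R : 'I_(w.+2)) != q%:R by rewrite eqZ_nat /= ?valZ_nat ?modn_small //; lia.
rewrite inE.
case: (eqVneq u 0%:R) => [->|_]; first by rewrite (negbTE h0p) (negbTE h0q).
case: (eqVneq u p%:R) => [->|_]; first by rewrite (negbTE hpq').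
by case: (eqVneq u q%:R).
Qed.


Lemma f00 (D V p q : nat) : (0 < D)%N -> (D < V)%N -> (0 < p)%N -> (p < q)%N -> (q.*2 < V)%N ->
  ((0 + D) %% V == 0)%N = false.
Proof. move=> *; bfalse. Qed.

Lemma f0p (D V p q : nat) : (0 < D)%N -> (D < V)%N -> (0 < p)%N -> (p < q)%N -> (q.*2 < V)%N ->
  ((0 + D) %% V == p)%N = (D == p).
Proof. move=> *; beq. Qed.

Lemma f0q (D V p q : nat) : (0 < D)%N -> (D < V)%N -> (0 < p)%N -> (p < q)%N -> (q.*2 < V)%N ->
  ((0 + D) %% V == q)%N = (D == q).
Proof. move=> *; beq. Qed.

Lemma fp0 (D V p q : nat) : (0 < D)%N -> (D < V)%N -> (0 < p)%N -> (p < q)%N -> (q.*2 < V)%N ->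
  ((p + D) %% V == 0)%N = (D + p == V)%N.
Proof. move=> *; beq. Qed.

Lemma fpp (D V p q : nat) : (0 < D)%N -> (D < V)%N -> (0 < p)%N -> (p < q)%N -> (q.*2 < V)%N ->
  ((p + D) %% V == p)%N = false.
Proof. move=> *; bfalse. Qed.

Lemma fpq (D V p q : nat) : (0 < D)%N -> (D < V)%N -> (0 < p)%N -> (p < q)%N -> (q.*2 < V)%N ->
  ((p + D) %% V == q)%N = (D == q - p)%N.
Proof. move=> *; beq. Qed.

Lemma fq0 (D V p q : nat) : (0 < D)%N -> (D < V)%N -> (0 < p)%N -> (p < q)%N -> (q.*2 < V)%N ->
  ((q + D) %% V == 0)%N = (D + q == V)%N.
Proof. move=> *; beq. Qed.

Lemma fqp (D V p q : nat) : (0 < D)%N -> (D < V)%N -> (0 < p)%N -> (p < q)%N -> (q.*2 < V)%N ->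
  ((q + D) %% V == p)%N = (D + (q - p) == V)%N.
Proof. move=> *; beq. Qed.

Lemma fqq (D V p q : nat) : (0 < D)%N -> (D < V)%N -> (0 < p)%N -> (p < q)%N -> (q.*2 < V)%N ->
  ((q + D) %% V == q)%N = false.
Proof. move=> *; bfalse. Qed.

Lemma nine (D V p q : nat) : (0 < D)%N -> (D < V)%N -> (0 < p)%N -> (p < q)%N -> (q.*2 < V)%N ->
  ((((0 + D) %% V == 0) + ((0 + D) %% V == p) + ((0 + D) %% V == q)) +
   (((p + D) %% V == 0) + ((p + D) %% V == p) + ((p + D) %% V == q)) +
   (((q + D) %% V == 0) + ((q + D) %% V == p) + ((q + D) %% V == q)) =
  (D == p) + (D == q) + (D == q - p) + (D + p == V) + (D + q == V) + (D + (q - p) == V))%N.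
Proof.
move=> h1 h2 h3 h4 h5.
rewrite (f00 h1 h2 h3 h4 h5) (f0p h1 h2 h3 h4 h5) (f0q h1 h2 h3 h4 h5) (fp0 h1 h2 h3 h4 h5) (fpp h1 h2 h3 h4 h5) (fpq h1 h2 h3 h4 h5) (fq0 h1 h2 h3 h4 h5) (fqp h1 h2 h3 h4 h5) (fqq h1 h2 h3 h4 h5) /=.
lia.
Qed.

Lemma Nf_blk w p q (d : 'I_(w.+2)) : (0 < p)%N -> (p < q)%N -> (q.*2 < w.+2)%N -> d != 0 ->
  Nf (blk w p q) d = ((val d == p) + (val d == q) + (val d == q - p) +
     (val d + p == w.+2) + (val d + q == w.+2) + (val d + (q - p) == w.+2))%N.
Proof.
move=> h0 hpq hq hd.
have hq' : (q < w.+2)%N by lia.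
have hD : (0 < val d)%N by rewrite lt0n; apply: contra hd => /eqP h; apply/eqP; apply: val_inj.
have hDV : (val d < w.+2)%N by exact: ltn_ord.
rewrite /Nf.
under eq_bigr => u _ do rewrite (mem3 u h0 hpq hq') (mem3 (u + d) h0 hpq hq') !mulnDl.
rewrite !big_split !sum_eq1.
rewrite !eqZ_shift //; try lia.
exact: nine.
Qed.

Local Close Scope ring_scope.


Definition good (w n : nat) (a b : nat -> nat) : Prop :=
  [/\ w.+2 = (6 * n).+1,
      (forall j, (j < n)%N -> [/\ (0 < a j)%N, (0 < b j)%N & (a j + b j <= 3 * n)%N]) &
      (forall D, (0 < D)%N -> (D <= 3 * n)%N ->
         (\sum_(j < n) ((D == a j) + (D == b j) + (D == a j + b j)))%N = 1%N)].

Definition Ef (V a b D : nat) : nat :=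
  ((D == a) + (D == b) + (D == a + b) + (D + a == V) + (D + b == V) + (D + (a + b) == V))%N.

Lemma Ef_low V a b D : (D + (a + b) < V)%N -> (0 < a)%N -> (0 < b)%N ->
  Ef V a b D = ((D == a) + (D == b) + (D == a + b))%N.
Proof.
move=> h ha hb; rewrite /Ef.
rewrite (_ : (D + a == V) = false); last by apply/negbTE/eqP; lia.
rewrite (_ : (D + b == V) = false); last by apply/negbTE/eqP; lia.
rewrite (_ : (D + (a + b) == V) = false); last by apply/negbTE/eqP; lia.
by rewrite !addn0.
Qed.

Lemma Ef_high V a b D : (a + b < D)%N -> (D < V)%N ->
  Ef V a b D = ((V - D == a) + (V - D == b) + (V - D == a + b))%N.
Proof.
move=> h hV; rewrite /Ef.
rewrite (_ : (D == a) = false); last by apply/negbTE/eqP; lia.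
rewrite (_ : (D == b) = false); last by apply/negbTE/eqP; lia.
rewrite (_ : (D == a + b) = false); last by apply/negbTE/eqP; lia.
rewrite (_ : (D + a == V) = (V - D == a)); last by apply/eqP/eqP; lia.
rewrite (_ : (D + b == V) = (V - D == b)); last by apply/eqP/eqP; lia.
rewrite (_ : (D + (a + b) == V) = (V - D == a + b)); last by apply/eqP/eqP; lia.
by rewrite !add0n.
Qed.

Lemma sumEf w n a b D : good w n a b -> (0 < D)%N -> (D < w.+2)%N ->
  (\sum_(j < n) Ef w.+2 (a j) (b j) D)%N = 1%N.
Proof.
case=> hV hab hH hD hDV.
case: (leqP D (3 * n)) => hDn.
  rewrite -(hH D hD hDn); apply: eq_bigr => j _.
  have [h1 h2 h3] := hab j (ltn_ord j).
  by apply: Ef_low => //; lia.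
have h1 : (0 < w.+2 - D)%N by lia.
have h2 : (w.+2 - D <= 3 * n)%N by lia.
rewrite -(hH _ h1 h2); apply: eq_bigr => j _.
have [h3 h4 h5] := hab j (ltn_ord j).
by apply: Ef_high => //; lia.
Qed.

Lemma Ef_self V a b : (0 < Ef V a b a)%N.
Proof. by rewrite /Ef eqxx. Qed.

Lemma good_neq w n a b j : good w n a b -> (j < n)%N -> a j != b j.
Proof.
move=> hg hj; apply/eqP => E.
case: hg => hV hab hH.
have [h1 h2 h3] := hab j hj.
have := hH (a j) h1 (leq_trans (leq_addr _ _) h3).
rewrite (bigD1 (Ordinal hj)) //= eqxx E eqxx /=.
lia.
Qed.


Definition base w n (a b : nat -> nat) (X : 'I_n * bool) : {set 'I_(w.+2)} :=
  if X.2 then blk w (b X.1) (a X.1 + b X.1) else blk w (a X.1) (a X.1 + b X.1).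

Lemma Nf_base w n a b (X : 'I_n * bool) (d : 'I_(w.+2)) : good w n a b -> d != 0%R ->
  Nf (base w a b X) d = Ef w.+2 (a X.1) (b X.1) (val d).
Proof.
case=> hV hab hH hd.
have [h1 h2 h3] := hab X.1 (ltn_ord _).
rewrite /base; case: X.2.
  rewrite Nf_blk //; [ | lia | lia].
  by rewrite /Ef addnK; lia.
rewrite Nf_blk //; [ | lia | lia].
by rewrite /Ef addKn; lia.
Qed.

Lemma nat_inj_aux V p q T : (0 < p)%N -> (p < q)%N -> (q.*2 < V)%N -> p.*2 != q ->
  [|| T == 0%N, T == p | T == q] ->
  [|| (T + T) %% V == 0%N, (T + T) %% V == p | (T + T) %% V == q] -> T = 0%N.
Proof.
move=> h1 h2 h3 h4.
case/or3P => /eqP ->; rewrite ?modn_small //; try lia; case/or3P => /eqP; move: h4 => /eqP; lia.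
Qed.

Lemma trs_inj_blk w p q : (0 < p)%N -> (p < q)%N -> (q.*2 < w.+2)%N -> p.*2 != q ->
  injective (fun k => trs k (blk w p q)).
Proof.
move=> h1 h2 h3 h4 k l /= H.
set t := (k - l)%R.
have hp : (p < w.+2)%N by lia.
have hq : (q < w.+2)%N by lia.
have m0 : (0%:R : 'I_(w.+2))%R \in blk w p q by rewrite inE eqxx.
have ht : t \in blk w p q.
  have : k \in trs k (blk w p q) by rewrite inE subrr.
  by rewrite H inE.
have htt : (t + t)%R \in blk w p q.
  have : (k + t)%R \in trs k (blk w p q) by rewrite inE (addrC k) addrK.
  have E : (k + t - l = t + t)%R by rewrite addrAC.
  by rewrite H inE E.
rewrite mem_blk // in ht; rewrite mem_blk // valZ_add in htt.
have := nat_inj_aux h1 h2 h3 h4 ht htt => /eqP.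
rewrite -[0%N]/(val (0 : 'I_(w.+2))%R) val_eqE subr_eq0 => /eqP //.
Qed.

Lemma nat_PQ V S a b : (S < V)%N -> (0 < a)%N -> (0 < b)%N -> a != b -> ((a + b).*2 < V)%N ->
  [|| (0 + S) %% V == 0%N, (0 + S) %% V == b | (0 + S) %% V == a + b] ->
  [|| (a + S) %% V == 0%N, (a + S) %% V == b | (a + S) %% V == a + b] ->
  [|| (a + b + S) %% V == 0%N, (a + b + S) %% V == b | (a + b + S) %% V == a + b] -> False.
Proof.
move=> hS ha hb /eqP hab hV.
rewrite add0n (modn_small hS).
case/or3P => /eqP ->; rewrite !modn_small; try lia;
  case/or3P => /eqP ?; case/or3P => /eqP ?; lia.
Qed.

Lemma no_PQ w a b (t : 'I_(w.+2)) : (0 < a)%N -> (0 < b)%N -> a != b -> ((a + b).*2 < w.+2)%N ->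
  blk w a (a + b) != trs t (blk w b (a + b)).
Proof.
move=> ha hb hab hV; apply/negP => /eqP H.
have mem y : (y \in blk w a (a + b)) -> ((y - t)%R \in blk w b (a + b)).
  by rewrite H inE.
have hbV : (b < w.+2)%N by lia.
have hcV : (a + b < w.+2)%N by lia.
have haV : (a < w.+2)%N by lia.
have m0' := mem (0%:R)%R ltac:(by rewrite inE eqxx).
have ma' := mem (a%:R)%R ltac:(by rewrite inE eqxx orbT).
have mc' := mem ((a + b)%:R)%R ltac:(by rewrite inE eqxx !orbT).
rewrite !mem_blk // !valZ_add !valZ_nat mod0n (modn_small haV) (modn_small hcV) in m0' ma' mc'.
exact: (nat_PQ (ltn_ord (- t)%R) ha hb hab hV m0' ma' mc').
Qed.

Lemma base_orbit_eq w n a b (X Y : 'I_n * bool) (k l : 'I_(w.+2)) : good w n a b ->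
  trs k (base w a b X) = trs l (base w a b Y) -> X = Y.
Proof.
move=> hg H; have H' := trs_inv H.
have hN d : Nf (base w a b X) d = Nf (base w a b Y) d by rewrite H' Nf_trs.
case: hg => hV hab hH.
case: X Y H H' hN => j e [j' e'] H H' hN /=.
have [h1 h2 h3] := hab j (ltn_ord _).
have haV : (a j < w.+2)%N by lia.
have ejj : j = j'.
  apply/eqP; apply/negPn/negP => hjj.
  have hd : ((a j)%:R : 'I_(w.+2))%R != 0%R.
    by rewrite -val_eqE /= valZ_nat modn_small //; lia.
  have := hN ((a j)%:R)%R.
  rewrite !Nf_base // /= valZ_nat modn_small // => E.
  have := @sumEf w n a b (a j) (And3 hV hab hH) h1 haV.
  rewrite (bigD1 j) //= (bigD1 j') //=; last by rewrite eq_sym.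
  have := Ef_self w.+2 (a j) (b j).
  rewrite E. lia.
subst j'; congr (_, _).
have hab' : a j != b j by apply: (good_neq (And3 hV hab hH)).
have hV2 : ((a j + b j).*2 < w.+2)%N by lia.
case: e e' H H' {hN} => [] [] //= H H'.
  have H2 := trs_inv (esym H); rewrite /base /= in H2.
  by move: (no_PQ (k - l)%R h1 h2 hab' hV2); rewrite -H2 eqxx.
rewrite /base /= in H'.
by move: (no_PQ (l - k)%R h1 h2 hab' hV2); rewrite -H' eqxx.
Qed.


Definition wt n i (X : 'I_n * bool) : nat :=
  if X.2 then (if (X.1 < i)%N then 0 else 1) else (if (X.1 < i)%N then 3 else 2).

Definition mm w n i a b : {ffun {set 'I_(w.+2)} -> nat} :=
  [ffun B => \sum_(X : 'I_n * bool) wt i X * (B \in orbitB (base w a b X))].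

Lemma trs_inj_base w n a b (X : 'I_n * bool) : good w n a b ->
  injective (fun k => trs k (base w a b X)).
Proof.
move=> hg; have [hV hab hH] := hg.
have [h1 h2 h3] := hab X.1 (ltn_ord _).
have hne := good_neq hg (ltn_ord X.1).
by rewrite /base; case: X.2; apply: trs_inj_blk; lia.
Qed.

Lemma mem_orbit_trs w k (B X : {set 'I_(w.+2)}) : (trs k B \in orbitB X) = (B \in orbitB X).
Proof.
rewrite !mem_orbitB; apply/existsP/existsP.
  by case=> l /eqP /trs_inv ->; exists (l - k)%R.
by case=> l /eqP ->; exists (k + l)%R; rewrite trsD.
Qed.

Lemma mm_orbit w n i a b (Y : 'I_n * bool) k : good w n a b ->
  mm w n i a b (trs k (base w a b Y)) = wt i Y.
Proof.
move=> hg; rewrite ffunE (bigD1 Y) //=.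
rewrite big1 ?addn0.
  by rewrite mem_orbit_trs mem_orbitB (_ : [exists _, _] = true) ?muln1 //; apply/existsP; exists 0%R; rewrite trs0.
move=> X hXY; rewrite mem_orbit_trs mem_orbitB.
case: existsP => [[l /eqP E]|]; last by rewrite muln0.
have := base_orbit_eq hg (esym (etrans (trs0 _) E)).
by move=> E'; rewrite E' eqxx in hXY.
Qed.

Lemma mm_zero w n i a b B : (forall Y : 'I_n * bool, B \notin orbitB (base w a b Y)) ->
  mm w n i a b B = 0%N.
Proof. by move=> H; rewrite ffunE big1 // => X _; rewrite (negbTE (H X)) muln0. Qed.

Lemma card_sumE (T : finType) (A : {set T}) : #|A| = (\sum_u (u \in A : nat))%N.
Proof.
rewrite -sum1_card big_mkcond; apply: eq_bigr => u _; by case: (u \in A).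
Qed.

Lemma card_trs w k (X : {set 'I_(w.+2)}) : #|trs k X| = #|X|.
Proof.
rewrite !card_sumE (reindex_inj (addIr k)) /=; apply: eq_bigr => u _.
by rewrite inE addrK.
Qed.

Lemma sum_eq1' w (s : 'I_(w.+2)) : (\sum_u (u == s : nat))%N = 1%N.
Proof. by rewrite (bigD1 s) //= eqxx big1 // => u /negbTE ->. Qed.

Lemma card_blk w p q : (0 < p)%N -> (p < q)%N -> (q < w.+2)%N -> #|blk w p q| = 3.
Proof.
move=> h1 h2 h3; rewrite card_sumE.
under eq_bigr => u _ do rewrite (mem3 u h1 h2 h3).
by rewrite !big_split /= !sum_eq1'.
Qed.


Lemma sum_in (T : finType) (A : {set T}) (F : T -> nat) :
  (\sum_u ((u \in A) * F u) = \sum_(u in A) F u)%N.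
Proof.
by rewrite [RHS]big_mkcond; apply: eq_bigr => u _; case: (u \in A); rewrite ?mul1n ?mul0n.
Qed.

Lemma pair_orbit w (X : {set 'I_(w.+2)}) (x y : 'I_(w.+2)) :
  injective (fun k => trs k X) ->
  (\sum_B ((B \in orbitB X) * ((x \in B) && (y \in B))))%N = Nf X (y - x)%R.
Proof.
move=> hinj.
rewrite sum_in orbitB_imset big_imset /=; last by move=> k l _ _; apply: hinj.
rewrite (eq_bigl predT) => [|k]; last by rewrite in_setT.
rewrite /Nf (reindex_inj (subrI x)) /=.
apply: eq_bigr => u _; rewrite !inE.
have -> : (x - (x - u))%R = u by ring.
have -> : (y - (x - u))%R = (u + (y - x))%R by ring.
by case: (u \in X); case: (_ \in X).
Qed.

Lemma pair_sum w n i a b (x y : 'I_(w.+2)) : good w n a b -> x != y ->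
  (\sum_(B : {set 'I_(w.+2)} | (x \in B) && (y \in B)) mm w n i a b B)%N = 3.
Proof.
move=> hg hxy.
rewrite big_mkcond /=.
rewrite (eq_bigr (fun B => \sum_(X : 'I_n * bool)
   wt i X * ((B \in orbitB (base w a b X)) * ((x \in B) && (y \in B))))%N); last first.
  move=> B _; rewrite ffunE; case: ifP => _.
    by apply: eq_bigr => X _; rewrite muln1.
  by rewrite big1 // => X _; rewrite !muln0.
rewrite exchange_big /=.
under eq_bigr => X _ do rewrite -big_distrr /= (pair_orbit _ _ (trs_inj_base (X:=X) hg)).
have hd : (y - x)%R != 0%R by rewrite subr_eq0 eq_sym.
under eq_bigr => X _ do rewrite (@Nf_base w n a b X _ hg hd).
rewrite (eq_bigr (fun X => (fun j e => wt i (j, e) * Ef w.+2 (a j) (b j) (val (y - x)%R)) X.1 X.2)%N);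
  last by move=> [j e].
rewrite -(pair_bigA _ (fun j e => wt i (j, e) * Ef w.+2 (a j) (b j) (val (y - x)%R))%N) /=.
under eq_bigr => j _ do rewrite big_bool /=.
rewrite (eq_bigr (fun j : 'I_n => 3 * Ef w.+2 (a j) (b j) (val (y - x)%R))%N); last first.
  by move=> j _; rewrite /wt /=; case: ifP => _; rewrite -mulnDl.
rewrite -big_distrr (sumEf hg).
- by [].
- by rewrite lt0n; move: hd; rewrite -val_eqE.
- exact: ltn_ord.
Qed.


Lemma mm_CTS w n i a b : good w n a b -> is_CTS 3 (mm w n i a b).
Proof.
move=> hg; split.
- move=> B hB.
  case: (pickP (fun Y : 'I_n * bool => B \in orbitB (base w a b Y))) => [Y HY | Hn]; last first.
    by rewrite mm_zero ?ltnn // in hB => Y; rewrite Hn.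
  move: HY; rewrite mem_orbitB => /existsP [k /eqP ->].
  rewrite card_trs; have [hV hab hH] := hg.
  case: Y => j e.
  have [h1 h2 h3] := hab j (ltn_ord _).
  by rewrite /base /=; case: e; apply: card_blk; lia.
- by move=> x y hxy; apply: pair_sum.
- move=> B; rewrite shiftB_trs !ffunE; apply: eq_bigr => X _.
  by rewrite mem_orbit_trs.
Qed.

Lemma fine_eq w n i a b r : good w n a b -> (0 < r)%N ->
  fine_c (mm w n i a b) r = #|[set X : 'I_n * bool | wt i X == r]|.
Proof.
move=> hg hr; rewrite /fine_c.
have -> : @orbitB w.+2 @: [set B | mm w n i a b B == r] =
          (fun X => orbitB (base w a b X)) @: [set X : 'I_n * bool | wt i X == r].
  apply/setP => O; apply/imsetP/imsetP.
    case=> B; rewrite inE => /eqP hB ->.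
    case: (pickP (fun Y : 'I_n * bool => B \in orbitB (base w a b Y))) => [Y HY | Hn]; last first.
      by move: hr; rewrite -hB mm_zero ?ltnn // => Y; rewrite Hn.
    move: HY; rewrite mem_orbitB => /existsP [k /eqP E].
    exists Y; last by rewrite E orbitB_trs.
    by rewrite inE -hB E mm_orbit.
  case=> Y; rewrite inE => /eqP hY ->.
  exists (base w a b Y) => //.
  by rewrite inE -hY -{1}(trs0 (base w a b Y)) mm_orbit.
rewrite card_in_imset // => X Y _ _ E.
have : base w a b X \in orbitB (base w a b Y).
  by rewrite -E mem_orbitB; apply/existsP; exists 0%R; rewrite trs0.
rewrite mem_orbitB => /existsP [k /eqP E2].
by apply: (base_orbit_eq (k := 0%R) (l := k) hg); rewrite trs0.
Qed.

Lemma sum_lt n i : (i <= n)%N -> (\sum_(j < n) (j < i : nat))%N = i.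
Proof.
move=> hin.
suff H : forall m, (\sum_(j < m) (j < i : nat))%N = minn i m by rewrite H; lia.
elim=> [|m IH]; first by rewrite big_ord0; lia.
rewrite big_ord_recr /= IH.
by case: ltnP => h /=; lia.
Qed.

Lemma sum_ge n i : (i <= n)%N -> (\sum_(j < n) (~~ (j < i) : nat))%N = n - i.
Proof.
move=> hin.
have H : (\sum_(j < n) (~~ (j < i) : nat) + \sum_(j < n) (j < i : nat))%N = n.
  rewrite -big_split /=.
  rewrite (eq_bigr (fun _ => 1%N)); last by move=> j _; case: (j < i)%N.
  by rewrite sum1_card card_ord.
rewrite sum_lt // in H; lia.
Qed.

Lemma card_wt n i r : #|[set X : 'I_n * bool | wt i X == r]| =
  (\sum_(j < n) ((wt i (j, true) == r) + (wt i (j, false) == r)))%N.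
Proof.
rewrite card_sumE.
rewrite (eq_bigr (fun X => (fun j e => (wt i (j, e) == r) : nat) X.1 X.2)); last first.
  by move=> [j e] _; rewrite inE.
rewrite -(pair_bigA _ (fun j e => (wt i (j, e) == r) : nat)) /=.
by apply: eq_bigr => j _; rewrite big_bool.
Qed.

Lemma card_wt3 n i : (i <= n)%N -> #|[set X : 'I_n * bool | wt i X == 3]| = i.
Proof.
move=> hin; rewrite card_wt -[RHS](sum_lt hin); apply: eq_bigr => j _.
by rewrite /wt /=; case: (j < i)%N.
Qed.

Lemma card_wt2 n i : (i <= n)%N -> #|[set X : 'I_n * bool | wt i X == 2]| = n - i.
Proof.
move=> hin; rewrite card_wt -[RHS](sum_ge hin); apply: eq_bigr => j _.
by rewrite /wt /=; case: (j < i)%N.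
Qed.

Lemma card_wt1 n i : (i <= n)%N -> #|[set X : 'I_n * bool | wt i X == 1]| = n - i.
Proof.
move=> hin; rewrite card_wt -[RHS](sum_ge hin); apply: eq_bigr => j _.
by rewrite /wt /=; case: (j < i)%N.
Qed.

Lemma abstract_main w n i a b : good w n a b -> (i <= n)%N ->
  exists m : {ffun {set 'I_(w.+2)} -> nat},
    [/\ is_CTS 3 m, fine_c m 2 = n - i, fine_c m 3 = i & fine_c m 1 = n - i].
Proof.
move=> hg hin; exists (mm w n i a b); split.
- exact: mm_CTS.
- by rewrite fine_eq // card_wt2.
- by rewrite fine_eq // card_wt3.
- by rewrite fine_eq // card_wt1.
Qed.


Definition sk0 (s k : nat) : nat :=
  if ~~ odd k then 6 * s - k./2
  else if k == 1 then s
  else if k <= 2 * s - 3 then s + 1 + (2 * s - 1 - k)./2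
  else if k == 2 * s - 1 then 2 * s
  else if k == 2 * s + 1 then s - 1
  else if k <= 4 * s - 3 then (4 * s - 1 - k)./2
  else 2 * s + 1.

Definition sk1 (s k : nat) : nat :=
  if ~~ odd k then 6 * s + 2 - k./2
  else if k == 1 then s + 1
  else if k <= 2 * s - 3 then s + 2 + (2 * s - 1 - k)./2
  else if k == 2 * s - 1 then 2 * s + 2
  else if k <= 4 * s - 1 then (4 * s + 1 - k)./2
  else 2 * s + 1.

Lemma sk0_range s k : 2 <= s -> 1 <= k <= 4 * s -> 1 <= sk0 s k /\ sk0 s k + k <= 8 * s.
Proof.
move=> hs /andP [h1 h2]; rewrite /sk0.
repeat case: ifP => ?; lia.
Qed.

Lemma sk0_inj s k1 k2 (e1 e2 : bool) : 2 <= s -> 1 <= k1 <= 4 * s -> 1 <= k2 <= 4 * s ->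
  sk0 s k1 + (if e1 then k1 else 0) = sk0 s k2 + (if e2 then k2 else 0) -> k1 = k2 /\ e1 = e2.
Proof.
move=> hs /andP [h1 h2] /andP [h3 h4]; rewrite /sk0.
case: e1; case: e2; repeat (case: ifP => ?); lia.
Qed.

Lemma sk1_range s k : 2 <= s -> 1 <= k <= 4 * s + 1 -> 1 <= sk1 s k /\ sk1 s k + k <= 8 * s + 2.
Proof.
move=> hs /andP [h1 h2]; rewrite /sk1.
repeat case: ifP => ?; lia.
Qed.

Lemma sk1_inj s k1 k2 (e1 e2 : bool) : 2 <= s -> 1 <= k1 <= 4 * s + 1 -> 1 <= k2 <= 4 * s + 1 ->
  sk1 s k1 + (if e1 then k1 else 0) = sk1 s k2 + (if e2 then k2 else 0) -> k1 = k2 /\ e1 = e2.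
Proof.
move=> hs /andP [h1 h2] /andP [h3 h4]; rewrite /sk1.
case: e1; case: e2; repeat (case: ifP => ?); lia.
Qed.


Definition posf n (f : nat -> nat) (X : 'I_n * bool) : nat :=
  f X.1.+1 + (if X.2 then X.1.+1 else 0).

Lemma sum_hit1 m v : 0 < v <= m -> \sum_(P < m) (P.+1 == v : nat) = 1.
Proof.
move=> /andP [h1 h2].
have hv : v.-1 < m by lia.
rewrite (bigD1 (Ordinal hv)) //= big1 => [|P hP].
  by rewrite prednK // eqxx.
apply/eqP; rewrite eqb0; apply/eqP => E; move: hP; rewrite -val_eqE /= -E /=.
by rewrite eqxx.
Qed.

Lemma hit n (f : nat -> nat) :
  (forall k, 1 <= k <= n -> 1 <= f k /\ f k + k <= n.*2) ->
  (forall k1 k2 (e1 e2 : bool), 1 <= k1 <= n -> 1 <= k2 <= n ->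
     f k1 + (if e1 then k1 else 0) = f k2 + (if e2 then k2 else 0) -> k1 = k2 /\ e1 = e2) ->
  forall P, 1 <= P <= n.*2 ->
  \sum_(j < n) ((P == f j.+1) + (P == f j.+1 + j.+1)) = 1.
Proof.
move=> hr hi.
pose c P := \sum_(X : 'I_n * bool) (P == posf f X : nat).
have hc P : \sum_(j < n) ((P == f j.+1) + (P == f j.+1 + j.+1)) = c P.
  rewrite /c (eq_bigr (fun X => (fun j e => (P == posf f (j, e)) : nat) X.1 X.2)); last by case.
  rewrite -(pair_bigA _ (fun j e => (P == posf f (j, e)) : nat)) /=.
  by apply: eq_bigr => j _; rewrite big_bool /posf /= addn0 addnC.
have hinj (X Y : 'I_n * bool) : posf f X = posf f Y -> X = Y.
  case: X Y => [j1 e1] [j2 e2]; rewrite /posf /= => E.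
  have h1 : 1 <= j1.+1 <= n by have := ltn_ord j1; lia.
  have h2 : 1 <= j2.+1 <= n by have := ltn_ord j2; lia.
  case: (hi _ _ _ _ h1 h2 E) => [[] /val_inj -> ->] //.
have hle P : c P <= 1.
  case: (pickP (fun X : 'I_n * bool => P == posf f X)) => [X0 HX0 | none].
    rewrite /c (bigD1 X0) //= HX0 big1 // => X hX.
    apply/eqP; rewrite eqb0; apply/eqP => E; move: hX.
    by rewrite (hinj X X0) ?eqxx // -E (eqP HX0).
  by rewrite /c big1 // => X _; rewrite none.
have htot : \sum_(Q < n.*2) c Q.+1 = n.*2.
  rewrite /c exchange_big /=.
  rewrite (eq_bigr (fun _ => 1)); last first.
    move=> [j e] _; apply: sum_hit1.
    rewrite /posf /=; have := ltn_ord j; have := hr j.+1; case: e => /=; lia.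
  by rewrite sum1_card card_prod card_ord card_bool; lia.
have h0 : \sum_(Q < n.*2) (1 - c Q.+1) = 0.
  have : \sum_(Q < n.*2) (1 - c Q.+1) + \sum_(Q < n.*2) c Q.+1 = n.*2.
    rewrite -big_split /= (eq_bigr (fun _ => 1)); last by move=> Q _; rewrite subnK.
    by rewrite sum1_card card_ord.
  by rewrite htot; lia.
move=> P /andP [hP1 hP2]; rewrite hc.
have hQ : P.-1 < n.*2 by lia.
move/eqP: h0; rewrite sum_nat_eq0 => /forallP /(_ (Ordinal hQ)) /=.
rewrite prednK //; have := hle P; lia.
Qed.


Definition skol n k :=
  if n == 1 then 1
  else if n == 4 then nth 0 [:: 0; 1; 4; 5; 3] k
  else if n == 5 then nth 0 [:: 0; 1; 7; 3; 4; 5] k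
  else if n %% 4 == 0 then sk0 (n %/ 4) k else sk1 (n %/ 4) k.

Definition rangeb n := all (fun k => (1 <= skol n k) && (skol n k + k <= n.*2)) (iota 1 n).
Definition injb n := all (fun k1 => all (fun k2 => all (fun e1 : bool => all (fun e2 : bool =>
   (skol n k1 + (if e1 then k1 else 0) != skol n k2 + (if e2 then k2 else 0)) ||
   ((k1 == k2) && (e1 == e2))) [:: true; false]) [:: true; false]) (iota 1 n)) (iota 1 n).

Lemma rangeb_ok n : rangeb n -> forall k, 1 <= k <= n -> 1 <= skol n k /\ skol n k + k <= n.*2.
Proof.
move=> /allP H k hk.
have : k \in iota 1 n by rewrite mem_iota; lia.
by move/H => /andP [h1 h2].
Qed.

Lemma injb_ok n : injb n -> forall k1 k2 (e1 e2 : bool), 1 <= k1 <= n -> 1 <= k2 <= n ->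
  skol n k1 + (if e1 then k1 else 0) = skol n k2 + (if e2 then k2 else 0) -> k1 = k2 /\ e1 = e2.
Proof.
move=> /allP H k1 k2 e1 e2 h1 h2 E.
have m1 : k1 \in iota 1 n by rewrite mem_iota; lia.
have m2 : k2 \in iota 1 n by rewrite mem_iota; lia.
have /allP /(_ _ m2) /allP := H _ m1.
have me1 : e1 \in [:: true; false] by rewrite !inE; case: (e1).
have me2 : e2 \in [:: true; false] by rewrite !inE; case: (e2).
move=> /(_ _ me1) /allP /(_ _ me2).
by rewrite E eqxx /= => /andP [/eqP -> /eqP ->].
Qed.

Lemma skol_props n : (n %% 4 == 0) || (n %% 4 == 1) -> 1 <= n ->
  (forall k, 1 <= k <= n -> 1 <= skol n k /\ skol n k + k <= n.*2) /\
  (forall k1 k2 (e1 e2 : bool), 1 <= k1 <= n -> 1 <= k2 <= n ->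
    skol n k1 + (if e1 then k1 else 0) = skol n k2 + (if e2 then k2 else 0) -> k1 = k2 /\ e1 = e2).
Proof.
move=> hn h1.
case: (eqVneq n 1) => [->|n1]; first by split; [apply: rangeb_ok | apply: injb_ok].
case: (eqVneq n 4) => [->|n4]; first by split; [apply: rangeb_ok | apply: injb_ok].
case: (eqVneq n 5) => [->|n5]; first by split; [apply: rangeb_ok | apply: injb_ok].
have hs : 2 <= n %/ 4 by lia.
rewrite /skol (negbTE n1) (negbTE n4) (negbTE n5).
case: (boolP (n %% 4 == 0)) => h0; rewrite ?h0 ?(negbTE h0) /=.
  have hn' : n = 4 * (n %/ 4) by lia.
  split.
    move=> k hk; have := @sk0_range (n %/ 4) k hs; lia.
  move=> k1 k2 e1 e2 hk1 hk2; apply: sk0_inj => //; lia.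
have hn' : n = 4 * (n %/ 4) + 1 by lia.
split.
  move=> k hk; have := @sk1_range (n %/ 4) k hs; lia.
move=> k1 k2 e1 e2 hk1 hk2; apply: sk1_inj => //; lia.
Qed.

Lemma skol_good w n : (n %% 4 == 0) || (n %% 4 == 1) -> 1 <= n -> w.+2 = (6 * n).+1 ->
  good w n (fun j => j.+1) (fun j => n + skol n j.+1).
Proof.
move=> hn h1 hw.
have [hr hi] := skol_props hn h1.
have hh := hit hr hi.
split => //.
  move=> j hj; have := hr j.+1; split; lia.
move=> D hD1 hD2.
rewrite !big_split /=.
case: (leqP D n) => hDn.
  have hD : D.-1 < n by lia.
  rewrite (bigD1 (Ordinal hD)) //= prednK // eqxx big1 => [|j hj]; last first.
    by apply/eqP; rewrite eqb0; apply/eqP => E; move: hj; rewrite -val_eqE /= E /= eqxx.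
  rewrite big1 => [|j _]; last first.
    have := hr j.+1; have := ltn_ord j => h2 h3.
    by apply/eqP; rewrite eqb0; apply/eqP; lia.
  rewrite big1 // => j _.
  have := hr j.+1; have := ltn_ord j => h2 h3.
  by apply/eqP; rewrite eqb0; apply/eqP; lia.
rewrite big1 => [|j _]; last first.
  by apply/eqP; rewrite eqb0; apply/eqP; have := ltn_ord j; lia.
rewrite add0n -big_split -(hh (D - n)); last by lia.
apply: eq_bigr => j _.
rewrite (_ : (D == n + skol n j.+1) = (D - n == skol n j.+1)); last by apply/eqP/eqP; lia.
by rewrite (_ : (D == j.+1 + (n + skol n j.+1)) = (D - n == skol n j.+1 + j.+1)) //; apply/eqP/eqP; lia.
Qed.


Theorem mainTheorem8 (v i : nat) :
  (v %% 24 = 1 \/ v %% 24 = 7) -> 7 <= v -> i <= (v - 1) %/ 6 ->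
  exists m : {ffun {set 'I_v} -> nat},
    [/\ is_CTS 3 m,
        fine_c m 2 = (v - 1) %/ 6 - i,
        fine_c m 3 = i
      & fine_c m 1 = 3 * ((v - 1) %/ 6) - 2 * fine_c m 2 - 3 * fine_c m 3].
Proof.
move=> hv h7 hi.
have [w hw] : exists w, v = w.+2 by exists (v - 2); lia.
subst v.
have hn : ((w.+1 %/ 6) %% 4 == 0) || ((w.+1 %/ 6) %% 4 == 1) by lia.
have h1 : 1 <= w.+1 %/ 6 by lia.
have hw6 : w.+2 = (6 * (w.+1 %/ 6)).+1 by lia.
have hg := skol_good hn h1 hw6.
rewrite subSS subn0 in hi *.
have [m [hc h2 h3 h4]] := abstract_main hg hi.
exists m; split => //.
by rewrite h2 h3 h4; lia.
Qed.
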